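(* Let $F$ be a field of characteristic $2$, let $q$ be a totally singular quadratic form over $F$ and let $L/F$ be a finite field extension. Then $N_{L/F}(G_L(q_L))\subseteq G_F(q)$.
   Context: $N_{L/F}:L\to F$ is the field norm. For a form $\psi$ over a field $E$, $G_E(\psi)=\{c\in E^*:\psi\cong c\psi\}$; if $\psi$ is a zero form (all values $0$) or has dimension $0$, then $G_E(\psi)=E^*$. A totally singular quadratic form is one isometric to $\sum a_ix_i^2$. *)

(* Defs.v *)
From HB Require Import structures.
From mathcomp Require Import all_boot all_order all_algebra all_field.
Set Implicit Arguments. Unset Strict Implicit. Unset Printing Implicit Defensive.
Import GRing.Theory.
Local Open Scope ring_scope.

Definition fieldNorm (F : fieldType) (L : fieldExtType F) (x : L) : F :=
  \det (passmx.mxof (vbasis {:L}) (vbasis {:L}) (amulr x)).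

Definition tsform (K : fieldType) (n : nat) (a : 'I_n -> K) (x : 'rV[K]_n) : K :=
  \sum_(i < n) a i * x 0 i ^+ 2.

Definition ts_isometric (K : fieldType) (n : nat) (a b : 'I_n -> K) : Prop :=
  exists2 M : 'M[K]_n, M \in unitmx & forall x : 'rV[K]_n, tsform b (x *m M) = tsform a x.

Definition simFactor (K : fieldType) (n : nat) (a : 'I_n -> K) (c : K) : Prop :=
  c != 0 /\ ts_isometric a (fun i => c * a i).

(* Main.v *)
Require Import Defs.
From HB Require Import structures.
From mathcomp Require Import all_boot all_order all_algebra all_field.
Set Implicit Arguments. Unset Strict Implicit. Unset Printing Implicit Defensive.
Import GRing.Theory.
Local Open Scope ring_scope.
Import passmx.

Section Char2.
Variable R : comPzRingType.
Hypothesis two0 : (2%:R : R) = 0.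

Lemma sqrD2 (x y : R) : (x + y) ^+ 2 = x ^+ 2 + y ^+ 2.
Proof. by rewrite sqrrD -mulr_natr two0 mulr0 addr0. Qed.

Lemma addxx2 (x : R) : x + x = 0.
Proof. by rewrite -mulr2n -mulr_natr two0 mulr0. Qed.

Lemma oppr2 (x : R) : - x = x.
Proof. by apply/eqP; rewrite eq_sym -addr_eq0 addxx2. Qed.

Lemma sqr_sum2 (I : Type) (r : seq I) (P : pred I) (f : I -> R) :
  (\sum_(i <- r | P i) f i) ^+ 2 = \sum_(i <- r | P i) f i ^+ 2.
Proof.
apply: (big_rec2 (fun x y => x ^+ 2 = y)); first by rewrite expr0n.
by move=> i x y _ <-; rewrite sqrD2.
Qed.
End Char2.

Section Forms.
Variable K : fieldType.
Hypothesis two0 : (2%:R : K) = 0.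

Lemma tsform_mul n (b : 'I_n -> K) (x : 'rV[K]_n) (M : 'M[K]_n) :
  tsform b (x *m M) = \sum_i x 0 i ^+ 2 * \sum_j b j * M i j ^+ 2.
Proof.
rewrite /tsform.
under eq_bigr => j _ do rewrite mxE (sqr_sum2 two0) big_distrr /=.
rewrite exchange_big /=; apply: eq_bigr => i _; rewrite big_distrr /=.
by apply: eq_bigr => j _; rewrite exprMn mulrCA mulrA.
Qed.

Lemma tsformD n (b : 'I_n -> K) (x y : 'rV[K]_n) :
  tsform b (x + y) = tsform b x + tsform b y.
Proof.
rewrite /tsform -big_split /=; apply: eq_bigr => i _.
by rewrite mxE (sqrD2 two0) mulrDr.
Qed.

Lemma tsformN n (b : 'I_n -> K) (x : 'rV[K]_n) : tsform b (- x) = tsform b x.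
Proof. by rewrite /tsform; apply: eq_bigr => i _; rewrite mxE sqrrN. Qed.

Lemma iso_build n (a b : 'I_n -> K) (A B : 'M[K]_n) :
  (forall x, tsform b (x *m A) = tsform a x) ->
  (forall y, tsform a (y *m B) = tsform b y) ->
  ts_isometric a b.
Proof.
move=> hA hB.
set Lm := col_ebase A; set Rm := row_ebase A; set r := \rank A.
have rn : (r <= n)%N by apply: rank_leq_row.
set C := Lm *m copid_mx r *m Rm.
exists (A + C - C *m B *m A).
  have eA : A = Lm *m pid_mx r *m Rm by rewrite mulmx_ebase.
  pose N : 'M[K]_n := copid_mx r *m (Rm *m B *m Lm) *m pid_mx r.
  have eM : A + C - C *m B *m A = Lm *m (1%:M - N) *m Rm.
    rewrite /C /N {1 2}eA /copid_mx.
    rewrite !mulmxBr !mulmxBl !mulmx1 !mul1mx.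
    rewrite !mulmxA.
    set P := pid_mx r.
    rewrite -!mulmxA.
    have -> : Lm *m (P *m Rm) + (Lm *m Rm - Lm *m (P *m Rm)) = Lm *m Rm.
      by rewrite addrC subrK.
    congr (_ - _).
    by rewrite mulmxBl mulmxBr !mulmxA.
  have NN : N *m N = 0.
    rewrite /N -!mulmxA.
    by rewrite [pid_mx r *m _]mulmxA [pid_mx r *m copid_mx r]mul_pid_mx_copid // !(mul0mx, mulmx0).
  rewrite eM !unitmx_mul col_ebase_unit row_ebase_unit andbT /=.
  apply: (proj1 (@mulmx1_unit _ _ _ (1%:M + N) _)).
  by rewrite mulmxDr mulmx1 mulmxBl mul1mx NN subr0 subrK.
move=> x.
rewrite !mulmxDr mulmxN !tsformD tsformN.
by rewrite hA !mulmxA hA hB -addrA addxx2 // addr0.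
Qed.
End Forms.


Section NormBasics.
Variables (F : fieldType) (L : fieldExtType F).
Local Notation m := (\dim {:L}).

Lemma mxof_entry (b : m.-tuple L) (f : 'End(L)) i j :
  mxof b b f i j = coord b j (f b`_i).
Proof. by rewrite /mxof !mxE /= vecof_delta. Qed.

Lemma det_mxof_basis (b b' : m.-tuple L) (f : 'End(L)) :
  basis_of fullv b -> basis_of fullv b' ->
  \det (mxof b b f) = \det (mxof b' b' f).
Proof.
move=> bB bB'.
have e1 : f = (\1 \o f \o \1)%VF by apply/lfunP => u; rewrite !comp_lfunE !id_lfunE.
rewrite [in LHS]e1 (mxof_comp b b bB') (mxof_comp b' b bB').
have XY : mxof b b' \1 *m mxof b' b \1 = 1%:M.
  by rewrite -(mxof_comp b b bB') comp_lfun1l mxof1 // (basis_free bB).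
rewrite !det_mulmx mulrCA -det_mulmx XY det1 mulr1.
by [].
Qed.

Lemma fieldNorm_basis (b : m.-tuple L) (c : L) :
  basis_of fullv b -> fieldNorm c = \det (mxof b b (amulr c)).
Proof. by move=> bB; rewrite /fieldNorm (det_mxof_basis (b':=b) _ (vbasisP _) bB). Qed.

Lemma fieldNormM (x y : L) : fieldNorm (x * y) = fieldNorm x * fieldNorm y.
Proof.
have eB := vbasisP (fullv : {vspace L}).
rewrite /fieldNorm.
have -> : amulr (x * y) = (amulr y \o amulr x)%VF.
  by apply/lfunP => u; rewrite comp_lfunE !lfunE /= mulrA.
by rewrite (mxof_comp _ _ eB) det_mulmx mulrC.
Qed.

Lemma fieldNorm1 : fieldNorm (1 : L) = 1.
Proof.
have eB := vbasisP (fullv : {vspace L}).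
rewrite /fieldNorm.
have -> : amulr (1 : L) = \1%VF by apply/lfunP => u; rewrite !lfunE /= mulr1.
by rewrite mxof1 ?det1 // (basis_free eB).
Qed.

End NormBasics.


Section VSpace.
Variable K : fieldType.
Hypothesis two0 : (2%:R : K) = 0.
Variables (n : nat) (a : 'I_n -> K).

Definition inV (v : K) := exists f : 'I_n -> K, v = \sum_j f j ^+ 2 * a j.
Definition stab (x : K) := forall j, inV (x * a j).

Lemma inV0 : inV 0.
Proof. by exists (fun _ => 0); rewrite big1 // => j _; rewrite expr0n mul0r. Qed.

Lemma inVa j : inV (a j).
Proof.
exists (fun k => (k == j)%:R); rewrite (bigD1 j) //= eqxx expr1n mul1r big1 ?addr0 //.
by move=> k /negPf ->; rewrite expr0n mul0r.
Qed.

Lemma inVD u v : inV u -> inV v -> inV (u + v).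
Proof.
move=> [f ->] [g ->]; exists (fun j => f j + g j); rewrite -big_split /=.
by apply: eq_bigr => j _; rewrite (sqrD2 two0) mulrDl.
Qed.

Lemma inVZ s v : inV v -> inV (s ^+ 2 * v).
Proof.
move=> [f ->]; exists (fun j => s * f j); rewrite big_distrr /=.
by apply: eq_bigr => j _; rewrite exprMn mulrA.
Qed.

Lemma inVN v : inV v -> inV (- v).
Proof. by rewrite (oppr2 two0). Qed.

Lemma inV_sum (I : Type) (r : seq I) (P : pred I) (F : I -> K) :
  (forall i, P i -> inV (F i)) -> inV (\sum_(i <- r | P i) F i).
Proof. by move=> h; apply: big_ind => //; [exact: inV0 | exact: inVD]. Qed.

Lemma stab0 : stab 0.
Proof. by move=> j; rewrite mul0r; exact: inV0. Qed.
Lemma stab1 : stab 1.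
Proof. by move=> j; rewrite mul1r; exact: inVa. Qed.
Lemma stabD x y : stab x -> stab y -> stab (x + y).
Proof. by move=> hx hy j; rewrite mulrDl; apply: inVD. Qed.
Lemma stabN x : stab x -> stab (- x).
Proof. by rewrite (oppr2 two0). Qed.
Lemma stabM x y : stab x -> stab y -> stab (x * y).
Proof.
move=> hx hy j; rewrite -mulrA; have [f ->] := hy j; rewrite big_distrr /=.
apply: inV_sum => k _; rewrite mulrCA; apply: inVZ; exact: hx.
Qed.
Lemma stab_sq z : stab (z ^+ 2).
Proof. by move=> j; apply: inVZ; exact: inVa. Qed.

Lemma stab_det m (B : 'M[K]_m) : (forall i j, stab (B i j)) -> stab (\det B).
Proof.
move=> hB; rewrite /determinant.
apply: big_ind; [exact: stab0 | exact: stabD |] => s _.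
apply: stabM.
  by case: (perm.odd_perm s); rewrite ?expr1 ?expr0; [apply: stabN|]; exact: stab1.
by apply: big_ind; [exact: stab1 | exact: stabM |] => i _; exact: hB.
Qed.

Lemma tsform_delta (b : 'I_n -> K) i : tsform b (delta_mx 0 i) = b i.
Proof.
rewrite /tsform (bigD1 i) //= mxE !eqxx /= expr1n mulr1 big1 ?addr0 //.
by move=> k /negPf nk; rewrite mxE nk andbF expr0n mulr0.
Qed.

Lemma rows_of_iso (b : 'I_n -> K) (M : 'M[K]_n) :
  (forall x, tsform b (x *m M) = tsform a x) ->
  forall i, a i = \sum_j b j * M i j ^+ 2.
Proof.
move=> h i; rewrite -[a i](tsform_delta a i) -h (tsform_mul two0).
rewrite (bigD1 i) //= mxE !eqxx /= expr1n mul1r [X in _ + X]big1 ?addr0 //.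
by move=> k /negPf nk; rewrite mxE nk andbF expr0n mul0r.
Qed.

End VSpace.


Lemma det_block2 (R : comPzRingType) k u (A : 'M[R]_k) (q : 'M[R]_u) (hk : k = (u + u)%N) :
  let lsh := fun i : 'I_u => cast_ord (esym hk) (lshift u i) in
  let rsh := fun i : 'I_u => cast_ord (esym hk) (rshift u i) in
  (forall i j, A (lsh i) (lsh j) = q i j) ->
  (forall i j, A (lsh i) (rsh j) = 0) ->
  (forall i j, A (rsh i) (lsh j) = 0) ->
  (forall i j, A (rsh i) (rsh j) = q i j) ->
  \det A = \det q ^+ 2.
Proof.
subst k => lsh rsh h1 h2 h3 h4.
have -> : A = block_mx q 0 0 q.
  apply/matrixP => i j.
  case: (splitP i) => i0 hi; [have -> : i = lshift u i0 by apply: val_inj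
                               | have -> : i = rshift u i0 by apply: val_inj];
  case: (splitP j) => j0 hj; [have -> : j = lshift u j0 by apply: val_inj
                               | have -> : j = rshift u j0 by apply: val_inj
                               | have -> : j = lshift u j0 by apply: val_inj
                               | have -> : j = rshift u j0 by apply: val_inj].
  - by rewrite block_mxEul -h1 /lsh !cast_ord_id.
  - by rewrite block_mxEur mxE -(h2 i0 j0) /lsh /rsh !cast_ord_id.
  - by rewrite block_mxEdl mxE -(h3 i0 j0) /lsh /rsh !cast_ord_id.
  - by rewrite block_mxEdr -h4 /rsh !cast_ord_id.
by rewrite det_ublock expr2.
Qed.


Section SquareNorm.
Variables (F : fieldType) (L : fieldExtType F).
Variable K : {subfield L}.
Variables (g c : L).
Hypotheses (gK : g \notin K) (g2K : g ^+ 2 \in K) (cK : c \in K).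

Lemma deg2 : adjoin_degree K g = 2%N.
Proof.
have p0 : ('X^2 - (g ^+ 2)%:P : {poly L}) != 0.
  by rewrite -size_poly_eq0 size_addl ?size_polyXn // size_opp size_polyC; case: (_ != 0).
have sp : size ('X^2 - (g ^+ 2)%:P : {poly L}) = 3%N.
  by rewrite size_addl ?size_polyXn // size_opp size_polyC; case: (_ != 0).
have dv : minPoly K g %| 'X^2 - (g ^+ 2)%:P.
  apply: minPoly_dvdp.
    by rewrite rpredB ?rpredX ?polyOverX // polyOverC.
  by rewrite /root !hornerE subrr.
have := dvdp_leq p0 dv; rewrite sp size_minPoly ltnS => le2.
have := adjoin_deg_eq1 K g; rewrite (negPf gK).
move: le2; rewrite /adjoin_degree; case: (\dim_K _).-1 => [|[|k]] //.
Qed.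

Lemma K2sub : (<<K; g>> <= K + K * <[g]>)%VS.
Proof.
rewrite Fadjoin_eq_sum /Fadjoin_sum deg2 big_ord_recr big_ord1 /= expr0 expr1.
by rewrite prodv1.
Qed.


Lemma norm_square : exists z : F, fieldNorm c = z ^+ 2.
Proof.
pose K2 := <<K; g>>%AS.
have modF : (K2 * fullv <= fullv)%VS by exact: subvf.
have [X [_ nzX] [defF dxF]] := field_module_semisimple modF.
move: X nzX defF dxF.
set r := \dim_K2 fullv => X nzX defF dxF.
pose U := (\sum_(i < r) K * <[X`_i]>)%VS.
have XiNZ (i : 'I_r) : X`_i != 0 :> L.
  by apply/eqP => h; move: nzX; rewrite -h mem_nth // size_tuple.
have dimK2 : \dim K2 = (2 * \dim K)%N by rewrite dim_Fadjoin deg2.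
have dimF : \dim (fullv : {vspace L}) = (r * (2 * \dim K))%N.
  rewrite -{1}defF (directvP dxF) /=.
  under eq_bigr => i _ do rewrite dim_cosetv // dimK2.
  by rewrite sum_nat_const card_ord.
have dimU : (\dim U <= r * \dim K)%N.
  apply: leq_trans (dimv_leq_sum _ _ _) _.
  under eq_bigr => i _ do rewrite dim_cosetv //.
  by rewrite sum_nat_const card_ord.
have gnz : g != 0 by apply: contraNneq gK => ->; exact: mem0v.
have dimUg : \dim (U * <[g]>) = \dim U := dim_cosetv U gnz.
have cover : (fullv <= U + U * <[g]>)%VS.
  rewrite -defF; apply/subv_sumP => i _.
  apply: subv_trans (prodvSl _ K2sub) _.
  rewrite prodvDl; apply: addvS; first by apply: (sumv_sup i).
  by rewrite prodvAC; apply: prodvSl; apply: (sumv_sup i).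
have le1 : (\dim (fullv : {vspace L}) <= \dim (U + U * <[g]>))%N by apply: dimvS.
have le2 := (dimv_add_leqif U (U * <[g]>)).1.
have eqU : \dim U = (r * \dim K)%N.
  apply/eqP; rewrite eqn_leq dimU /=.
  rewrite -(leq_pmul2l (isT : (0 < 2)%N)) mulnCA -dimF.
  by rewrite (leq_trans le1) // (leq_trans le2) // dimUg addnn -mul2n.
have dxU : (U :&: (U * <[g]>))%VS = 0%VS.
  apply/eqP; rewrite -subv0 -(dimv_add_leqif U (U * <[g]>)).2.
  rewrite eqn_leq le2 /=.
  by rewrite (leq_trans _ le1) // dimF dimUg eqU addnn -mul2n mulnCA.
have KU : (K * U <= U)%VS.
  rewrite {1}/U big_distrr /=; apply/subv_sumP => i _.
  by rewrite prodvA prodv_id; apply: (sumv_sup i).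
have cU v : v \in U -> v * c \in U.
  by move=> vU; rewrite mulrC; apply: (subvP KU); apply: memv_mul.
clearbody U.
pose b1 := vbasis U.
pose b2 := [seq x * g | x <- b1].
have sb1 : <<b1>>%VS = U := span_basis (vbasisP U).
have sb2 : <<b2>>%VS = (U * <[g]>)%VS.
  have := limg_amulr U g; rewrite -{1}sb1 limg_span => <-.
  by congr <<_>>%VS; apply: eq_map => x; rewrite lfunE.
have szb1 : size b1 = \dim U by rewrite size_tuple.
have szb2 : size b2 = \dim U by rewrite size_map size_tuple.
have fb1 : free b1 := basis_free (vbasisP U).
have fb2 : free b2.
  have : basis_of (U * <[g]>) b2 by rewrite basisEdim sb2 subvv szb2 dimUg leqnn.
  exact: basis_free.
pose b := b1 ++ b2.
have fb : free b.
  by rewrite cat_free fb1 fb2 sb1 sb2 /=; apply/directv_addP.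
have hk : \dim (fullv : {vspace L}) = (\dim U + \dim U)%N.
  by rewrite dimF eqU addnn -mul2n mulnCA.
have hsz : size b == \dim (fullv : {vspace L}) by rewrite size_cat szb1 szb2 hk.
pose bt := Tuple hsz.
have bB : basis_of fullv bt.
  by rewrite basisEfree fb subvf /= (eqP hsz).
rewrite (fieldNorm_basis c bB).
pose q : 'M[F]_(\dim U) := \matrix_(i, k) coord b1 k (b1`_i * c).
exists (\det q).
pose u := \dim U.
pose lsh := fun i : 'I_u => cast_ord (esym hk) (lshift u i).
pose rsh := fun i : 'I_u => cast_ord (esym hk) (rshift u i).
have btl (i : 'I_u) : bt`_(lsh i) = b1`_i.
  by rewrite /= nth_cat szb1 ltn_ord.
have btr (i : 'I_u) : bt`_(rsh i) = b1`_i * g.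
  rewrite /= nth_cat szb1 ltnNge leq_addr /= addKn.
  by rewrite (nth_map 0) // szb1.
have cbl (k : 'I_u) j : coord bt j b1`_k = (lsh k == j)%:R.
  by rewrite -btl coord_free.
have cbr (k : 'I_u) j : coord bt j (b1`_k * g) = (rsh k == j)%:R.
  by rewrite -btr coord_free.
have b1U (i : 'I_u) : b1`_i \in U by apply: vbasis_mem; rewrite mem_nth // szb1.
have exp1 (i : 'I_u) : b1`_i * c = \sum_k q i k *: b1`_k.
  by rewrite {1}(coord_vbasis (cU _ (b1U i))); apply: eq_bigr => k _; rewrite mxE.
have exp2 (i : 'I_u) : b1`_i * g * c = \sum_k q i k *: (b1`_k * g).
  rewrite mulrAC exp1 mulr_suml; apply: eq_bigr => k _; by rewrite scalerAl.
have Aent x y : mxof bt bt (amulr c) x y = coord bt y (bt`_x * c).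
  by rewrite mxof_entry lfunE.
have sumd (i : 'I_u) (P : 'I_u -> pred 'I_(\dim fullv)) j :
    \sum_k q i k * (P k j)%:R = \sum_k q i k * (P k j)%:R by [].
apply: (det_block2 (hk := hk)) => i j.
- rewrite Aent btl exp1 linear_sum /=.
  rewrite (bigD1 j) //= linearZ /= cbl eqxx mulr1 big1 ?addr0 // => k kj.
  rewrite linearZ /= cbl.
  suff /negPf -> : lsh k != lsh j by rewrite mulr0.
  by rewrite -val_eqE /=.
- rewrite Aent btl exp1 linear_sum /= big1 // => k _.
  rewrite linearZ /= cbl.
  suff /negPf -> : lsh k != rsh j by rewrite mulr0.
  by rewrite -val_eqE /= neq_ltn (leq_trans (ltn_ord k)) ?leq_addr.
- rewrite Aent btr exp2 linear_sum /= big1 // => k _.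
  rewrite linearZ /= cbr.
  suff /negPf -> : rsh k != lsh j by rewrite mulr0.
  by rewrite -val_eqE /= neq_ltn (leq_trans (ltn_ord j)) ?leq_addr ?orbT.
- rewrite Aent btr exp2 linear_sum /=.
  rewrite (bigD1 j) //= linearZ /= cbr eqxx mulr1 big1 ?addr0 // => k kj.
  rewrite linearZ /= cbr.
  suff /negPf -> : rsh k != rsh j by rewrite mulr0.
  by rewrite -val_eqE /= eqn_add2l.
Qed.

End SquareNorm.


Section Key.
Variables (F : fieldType) (L : fieldExtType F) (n : nat) (a : 'I_n -> F).
Hypothesis two0 : (2%:R : F) = 0.

Let two0L : (2%:R : L) = 0.
Proof. by have := congr1 (in_alg L) two0; rewrite rmorph0 /= -in_algE rmorph_nat. Qed.

Let m := \dim (fullv : {vspace L}).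
Let e := vbasis (fullv : {vspace L}).
Let s := map_tuple (fun x : L => x ^+ 2) e.
Let S := <<s>>%VS.

Let s_nth (t : 'I_m) : s`_t = e`_t ^+ 2.
Proof. by rewrite /= (nth_map 0) // size_tuple. Qed.

Let sq_expand z : z ^+ 2 = \sum_(t < m) (coord e t z) ^+ 2 *: s`_t.
Proof.
rewrite {1}(coord_vbasis (memvf z)) (sqr_sum2 two0L).
by apply: eq_bigr => t _; rewrite exprZn s_nth.
Qed.

Let inS z : z ^+ 2 \in S.
Proof.
rewrite sq_expand; apply: memv_suml => t _; apply: memvZ; apply: memv_span.
by apply: mem_nth; rewrite size_tuple.
Qed.

Let VL_expand (y : 'I_n -> L) : \sum_k y k ^+ 2 * (a k)%:A =
  \sum_(t < m) (\sum_k coord e t (y k) ^+ 2 * a k) *: s`_t.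
Proof.
under eq_bigr => k _ do rewrite mulr_algr sq_expand scaler_sumr.
rewrite exchange_big /=; apply: eq_bigr => t _.
rewrite scaler_suml; apply: eq_bigr => k _.
by rewrite scalerA mulrC.
Qed.

Lemma key (c : L) :
  (forall j, exists y : 'I_n -> L, c * (a j)%:A = \sum_k y k ^+ 2 * (a k)%:A) ->
  stab a (fieldNorm c).
Proof.
move=> hc.
case: (boolP (basis_of fullv s)) => sB.
  rewrite (fieldNorm_basis c sB); apply: (stab_det two0) => i l.
  rewrite mxof_entry lfunE /= => j.
  have [y hy] := hc j.
  have e1 : coord s l (s`_i * c) * a j = coord s l (s`_i * c * (a j)%:A).
    by rewrite mulr_algr linearZ /= mulrC.
  rewrite e1 -mulrA hy mulr_sumr.
  have e2 : \sum_k s`_i * (y k ^+ 2 * (a k)%:A) =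
            \sum_k (e`_i * y k) ^+ 2 * (a k)%:A.
    by apply: eq_bigr => k _; rewrite s_nth mulrA exprMn.
  rewrite e2 VL_expand coord_sum_free ?(basis_free sB) //.
  by exists (fun k => coord e l (e`_i * y k)).
have notfull : ~~ (fullv <= S)%VS.
  apply: contra sB => fS; rewrite basisEdim fS /= size_tuple leqnn.
  by [].
have [g _ gS] := subvPn notfull.
case: (boolP [forall j, a j == 0]) => a0.
  by move=> j; rewrite (eqP (forallP a0 j)) mulr0; exact: inV0.
move/forallPn: a0 => [j0 aj0].
have SS : (S * S <= S)%VS.
  apply/prodvP => u v uS vS.
  rewrite (coord_span uS) mulr_suml; apply: memv_suml => i _.
  rewrite -scalerAl; apply: memvZ.
  rewrite (coord_span vS) mulr_sumr; apply: memv_suml => k _.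
  rewrite -scalerAr; apply: memvZ.
  by rewrite !s_nth -exprMn inS.
have isA : is_aspace S.
  by rewrite /is_aspace SS andbT has_algid1 // -(expr1n L 2) inS.
pose KS : {subfield L} := ASpace isA.
have cK : c \in KS.
  have [y hy] := hc j0.
  have h1 : c * (a j0)%:A \in S.
    rewrite hy; apply: memv_suml => k _; rewrite mulr_algr; apply: memvZ; exact: inS.
  have -> : c = (a j0)^-1 *: (c * (a j0)%:A).
    by rewrite mulr_algr scalerA mulVf // scale1r.
  exact: memvZ.
have [z hz] := norm_square (K:=KS) gS (inS g) cK.
by rewrite hz; apply: stab_sq.
Qed.
End Key.


Section Main.
Variables (F : fieldType) (L : fieldExtType F) (n : nat) (a : 'I_n -> F).
Hypothesis two0 : (2%:R : F) = 0.
Hypothesis key : forall c : L,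
  (forall j, exists y : 'I_n -> L, c * (a j)%:A = \sum_k y k ^+ 2 * (a k)%:A) ->
  stab a (fieldNorm c).

Lemma two0L : (2%:R : L) = 0.
Proof. by have := congr1 (in_alg L) two0; rewrite rmorph0 /= -in_algE rmorph_nat. Qed.

Lemma iso_from_stab d : d != 0 -> stab a d -> stab a d^-1 ->
  ts_isometric a (fun i => d * a i).
Proof.
move=> dnz sd sdi.
have [f hf] := fin_all_exists sd.
have [h hh] := fin_all_exists sdi.
apply: (@iso_build F two0 n a _ (\matrix_(i, j) h i j) (\matrix_(i, j) f i j)).
  move=> x; rewrite (tsform_mul two0) /tsform; apply: eq_bigr => i _.
  rewrite mulrC; congr (_ * _).
  have -> : a i = d * (d^-1 * a i) by rewrite mulrA mulfV // mul1r.
  rewrite hh big_distrr /=; apply: eq_bigr => j _.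
  by rewrite mxE -mulrA [X in _ * X]mulrC.
move=> y; rewrite (tsform_mul two0) /tsform; apply: eq_bigr => i _.
rewrite mulrC; congr (_ * _).
rewrite hf; apply: eq_bigr => j _.
by rewrite mxE mulrC.
Qed.

Theorem main_thm : forall c : L, simFactor (fun i => (a i)%:A) c ->
    simFactor a (fieldNorm c).
Proof.
move=> c [cnz [M Mu hM]].
have rowsL := rows_of_iso two0L hM.
have hinv : forall j, exists y : 'I_n -> L,
    c^-1 * (a j)%:A = \sum_k y k ^+ 2 * (a k)%:A.
  move=> j; exists (fun k => M j k); rewrite rowsL big_distrr /=.
  by apply: eq_bigr => t _; rewrite !mulrA mulVf // mul1r -mulrA -expr2 mulrC.
have hM' : forall x, tsform (fun i => c * (a i)%:A) x =
                     tsform (fun i => (a i)%:A) (x *m invmx M).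
  by move=> x; rewrite -hM mulmxKV.
have rowsL' := rows_of_iso two0L (fun x => esym (hM' x)).
have hc : forall j, exists y : 'I_n -> L,
    c * (a j)%:A = \sum_k y k ^+ 2 * (a k)%:A.
  move=> i; exists (fun k => invmx M i k); rewrite rowsL'.
  by apply: eq_bigr => t _; rewrite mulrC.
have s1 := key hc.
have s2 := key hinv.
have e1 : fieldNorm c * fieldNorm c^-1 = 1 by rewrite -fieldNormM mulfV // fieldNorm1.
have dnz : fieldNorm c != 0.
  by apply/eqP => h0; move: e1; rewrite h0 mul0r => /eqP; rewrite eq_sym oner_eq0.
split => //.
apply: iso_from_stab => //.
suff -> : (fieldNorm c)^-1 = fieldNorm c^-1 by [].
by apply: (mulfI dnz); rewrite e1 mulfV.
Qed.
End Main.


Unset Implicit Arguments.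

Theorem corollary7p2 (F : fieldType) (L : fieldExtType F) (n : nat) (a : 'I_n -> F) :
  (2%N \in [pchar F]) ->
  forall c : L, simFactor (fun i => (a i)%:A) c ->
    simFactor a (fieldNorm c).
Proof.
move=> ch2; have two0 : (2%:R : F) = 0 := pcharf0 ch2.
exact: (main_thm two0 (key two0)).
Qed.
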